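(* Let $\alpha,\beta<\omega^\omega$ and $m\in\mathbb{N}$. If $\alpha\le\beta$ and $\mathrm{MC}(\alpha)<m$, then $\alpha[m]\le\beta[m]$.
   Context: Ordinals $\alpha<\omega^\omega$ are written in Cantor normal form $\alpha=\omega^{n_0}+\dots+\omega^{n_{k-1}}$ with $n_0\ge\dots\ge n_{k-1}$, ordered as usual for ordinals. Writing $\alpha=\omega^{n}\cdot k_n+\dots+\omega^0\cdot k_0$ (with $\omega^j\cdot k$ the sum of $k$ copies of $\omega^j$), $\mathrm{MC}(\alpha)=\max\{k_n,\dots,k_0\}$. For $m\in\mathbb{N}$: $0[m]=0$, $(\beta+1)[m]=\beta$, and $(\beta+\omega^{n})[m]=\beta+\omega^{n-1}\cdot m$ for $n\ge1$ (with $\beta+\omega^n$ in Cantor normal form). *)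

(* Defs.v *)
From mathcomp Require Import all_boot.
Set Implicit Arguments. Unset Strict Implicit. Unset Printing Implicit Defensive.

(* Ordinals below omega^omega in Cantor normal form:
   alpha = omega^(n_0) + ... + omega^(n_{k-1}) with n_0 >= ... >= n_{k-1},
   represented by the list [:: n_0; ...; n_{k-1}] of exponents
   ([::] is the ordinal 0). *)
Definition is_cnf (s : seq nat) : bool := sorted geq s.

(* The usual ordinal order on CNFs: lexicographic comparison of the exponent
   lists, a proper prefix being smaller. *)
Fixpoint cnf_le (a b : seq nat) : bool :=
  match a, b with
  | [::], _ => true
  | _ :: _, [::] => false
  | x :: a', y :: b' => (x < y) || ((x == y) && cnf_le a' b')
  end.

(* MC(alpha) = max of the coefficients k_j in omega^n*k_n + ... + omega^0*k_0,
   i.e. the maximal multiplicity of an exponent in the CNF (0 for alpha = 0). *)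
Definition MC (a : seq nat) : nat := \max_(j <- a) count_mem j a.

(* Fundamental sequence: 0[m] = 0, (b+1)[m] = b,
   (b + omega^n)[m] = b + omega^(n-1)*m for n >= 1 (the last CNF term is
   replaced by m copies of omega^(n-1)). *)
Fixpoint fs (a : seq nat) (m : nat) : seq nat :=
  match a with
  | [::] => [::]
  | [:: 0] => [::]
  | [:: n.+1] => nseq m n
  | x :: a' => x :: fs a' m
  end.

(* Main.v *)
Require Import Defs.
From mathcomp Require Import all_boot.
From mathcomp Require Import zify.

Lemma fs_cons z s m : s != [::] -> fs (z :: s) m = z :: fs s m.
Proof. by case: s => [|w s] //; case: z. Qed.

Lemma cnf_le_cons x a y b : cnf_le (x :: a) (y :: b) = (x < y) || (x == y) && cnf_le a b.
Proof. by []. Qed.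

Lemma cnf_le_refl s : cnf_le s s.
Proof. by elim: s => //= x s ->; rewrite eqxx orbT. Qed.

Lemma lemA x m a : forall k, all (fun z => z <= x) a -> count_mem x a < k ->
  cnf_le (fs a m) (nseq k x).
Proof.
elim: a => [|z s IH] k //.
case/andP=> hz ha hc.
case: k hc => [|k] hc //.
case: s IH ha hc => [|w s] IH ha hc.
  case: z hz hc => [|z] hz hc //=; case: (m) => [|m0] //=; apply/orP; left; lia.
rewrite fs_cons // [nseq _ _]/= cnf_le_cons.
have [ezx|/eqP nzx] := eqVneq z x.
  subst z; apply/orP; right; apply/andP; split => //; apply: IH => //; move: hc; rewrite /= eqxx; lia.
apply/orP; left; lia.
Qed.

Lemma lemB y m a t : all (fun z => z < y) a -> cnf_le (fs a m) (y :: t).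
Proof.
case: a => [|z s] //; case/andP=> hz _.
case: s => [|w s].
  case: z hz => [|z] hz //=; case: m => [|m] //=; apply/orP; left; lia.
by rewrite fs_cons // cnf_le_cons hz.
Qed.

Lemma main_ind m alpha : forall beta,
  is_cnf alpha -> is_cnf beta ->
  cnf_le alpha beta -> (forall j, count_mem j alpha < m) ->
  cnf_le (fs alpha m) (fs beta m).
Proof.
elim: alpha => [|x a IH] [|y b] // ha hb hab hc.
rewrite cnf_le_cons in hab.
have allx : all (fun z => z <= x) a.
  apply/allP => z hz; have tr : transitive geq by move=> p q r h1 h2; exact: leq_trans h2 h1.
  have := order_path_min tr ha.
  by move/allP/(_ z hz).
have all' : forall y', x < y' -> all (fun z => z < y') (x :: a).
  move=> y' hy; rewrite /= hy /=; apply/allP => z hz.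
  by have := allP allx z hz; lia.
case/orP: hab => [hxy | /andP [/eqP exy hab]].
  case: b hb => [|w b] hb.
    case: y hxy hb => [|y] hxy hb //.
    rewrite [fs [:: _.+1] _]/=; apply: lemA.
      apply/allP => z; rewrite inE => /orP [/eqP ->|hz]; first lia.
      by have := allP allx z hz; lia.
    exact: hc.
  rewrite (fs_cons y) //; apply: lemB; exact: all' hxy.
subst y.
case: a IH ha allx all' hc hab => [|v a] IH ha allx all' hc hab.
  case: b hb hab => [|w b] hb hab; first exact: cnf_le_refl.
  rewrite (@fs_cons x (w :: b)) //.
  case: x {allx all' hc ha hb} => [|x] //=; case: (m) => [|m0] //=; apply/orP; left; lia.
case: b hb hab => [|w b] hb hab //.
rewrite (@fs_cons x (v :: a)) // (@fs_cons x (w :: b)) // cnf_le_cons; apply/orP; right; apply/andP; split => //.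
apply: IH.
- exact: path_sorted ha.
- exact: path_sorted hb.
- exact: hab.
- move=> j; have := hc j; rewrite /=; lia.
Qed.

Theorem lemma1p2 (alpha beta : seq nat) (m : nat) :
  is_cnf alpha -> is_cnf beta ->
  cnf_le alpha beta -> MC alpha < m ->
  cnf_le (fs alpha m) (fs beta m).
Proof.
move=> ha hb hab hm.
case: alpha ha hab hm => [|x a] ha hab hm; first by [].
apply: main_ind => // j.
have [hj|hj] := boolP (j \in x :: a).
  apply: leq_ltn_trans hm; rewrite /MC; apply: (@leq_bigmax_seq _ _ _ (fun j0 => count_mem j0 (x :: a)) j hj) => //.
move: hj => /count_memPn ->; exact: leq_ltn_trans (leq0n _) hm.
Qed.
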